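(* Let $r_1\ge\cdots\ge r_k\ge0$, let $M_1$ map $r_{1:k}=(r_1,\ldots,r_k)$ to $R_{1:k}=(R_1,\ldots,R_k)$ with $R_\tau=\sum_{j=1}^kr_j^\tau$, and let $M_2$ map $R_{1:k}$ to $t_{1:k}=(t_1,\ldots,t_k)$ defined by $t_0=1$, $t_1=R_1$, and $t_\tau=\sum_{j=1}^\tau\frac{(\tau-1)!}{(\tau-j)!}2^{j-1}R_jt_{\tau-j}$ for $\tau=2,\ldots,k$. Then: (1) The inverse $r_{1:k}=M_1^{-1}(R_{1:k})$ exists, i.e. $r_{1:k}$ is uniquely determined by $R_{1:k}$. Explicitly, let $a_k=R_1$ and $a_{k-j+1}=(R_j-\sum_{i=1}^{j-1}R_ia_{k-j+i+1})/j$ for $j=2,\ldots,k$, and let $A$ be the $k\times k$ matrix whose first $k-1$ rows are $[\,0_{k-1}\mid I_{k-1}\,]$ and whose last row is $(a_1,a_2,\ldots,a_k)$. Then $r_j$ is the $j$th largest modulus of the eigenvalues of $A$, $j=1,\ldots,k$. (2) The inverse $R_{1:k}=M_2^{-1}(t_{1:k})$ exists and is given by $R_1=t_1$ and $R_\tau=\frac{t_\tau}{(\tau-1)!2^{\tau-1}}-\sum_{j=1}^{\tau-1}\frac{t_{\tau-j}R_j}{(\tau-j)!2^{\tau-j}}$ for $\tau=2,\ldots,k$.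
   Context: $0_{k-1}$ denotes the zero column vector of length $k-1$ and $I_{k-1}$ the $(k-1)\times(k-1)$ identity matrix. In the paper, $r_1\ge\cdots\ge r_k$ are the odds of missing information $r_j=f_j/(1-f_j)$ where $f_1\ge\cdots\ge f_k$ are the eigenvalues (in $[0,1)$) of $I_{mis}I_{com}^{-1}$; $t_\tau$ is the $\tau$th moment of $\sum_j r_jU_j$ with $U_j\sim\chi^2_1$ independent. *)

(* Defs.v *)
From HB Require Import structures.
From mathcomp Require Import all_boot all_order all_algebra.
From mathcomp Require Import complex.
Set Implicit Arguments. Unset Strict Implicit. Unset Printing Implicit Defensive.
Import Order.TTheory GRing.Theory Num.Theory.
Local Open Scope ring_scope.

(* Indices: r : 'I_k -> R with (r i) = r_{i+1};  power sums / moments are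
   functions nat -> R, only the values at 1..k matter. *)

Section Defs.
Variable R : rcfType.

Definition powsum (k : nat) (r : 'I_k -> R) (tau : nat) : R :=
  \sum_(i < k) r i ^+ tau.

(* bseq Rs n = [:: b_1; ...; b_n] where b_j := a_{k-j+1}, so that
   b_1 = R_1 and b_j = (R_j - sum_{i=1}^{j-1} R_i b_{j-i}) / j,
   i.e. a_k = R_1, a_{k-j+1} = (R_j - sum_{i=1}^{j-1} R_i a_{k-j+i+1}) / j. *)
Fixpoint bseq (Rs : nat -> R) (n : nat) : seq R :=
  match n with
  | 0 => [::]
  | n'.+1 => let s := bseq Rs n' in
      rcons s ((Rs n - \sum_(i < n') Rs i.+1 * nth 0 s (n' - i.+1)%N) / n%:R)
  end.

(* a_m for m = 1..k  (a_m = b_{k-m+1}) ; acoef Rs k m = a_{m+1} for m : 'I_k *)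
Definition acoef (Rs : nat -> R) (k : nat) (m : 'I_k) : R :=
  nth 0 (bseq Rs k) (k - m.+1)%N.

Definition mi_matrixA (Rs : nat -> R) (k : nat) : 'M[R]_k :=
  \matrix_(i < k, j < k)
    if (i.+1 < k)%N then (j == i.+1 :> nat)%:R else acoef Rs j.

(* j-th largest (0-based index j) modulus of a list of complex numbers,
   counted with multiplicity *)
Definition jth_largest_mod (s : seq R[i]) (j : nat) : R[i] :=
  nth 0 (sort (fun x y : R[i] => y <= x) (map (fun z => `|z|) s)) j.

(* tlist Rs n = [:: t_0; ...; t_n] with t_0 = 1 and
   t_tau = sum_{j=1}^tau (tau-1)!/(tau-j)! 2^{j-1} R_j t_{tau-j}. *)
Fixpoint tlist (Rs : nat -> R) (n : nat) : seq R :=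
  match n with
  | 0 => [:: 1]
  | n'.+1 => let s := tlist Rs n' in
      rcons s (\sum_(j < n'.+1)
                 ((n'`!)%:R / ((n' - j)%N`!)%:R * 2 ^+ j * Rs j.+1
                  * nth 0 s (n' - j)%N))
  end.

Definition M2 (Rs : nat -> R) (tau : nat) : R := nth 0 (tlist Rs tau) tau.

(* Rlist t n = [:: R_1; ...; R_n] with R_1 = t_1 and
   R_tau = t_tau/((tau-1)! 2^{tau-1}) - sum_{j=1}^{tau-1} t_{tau-j} R_j/((tau-j)! 2^{tau-j}). *)
Fixpoint Rlist (t : nat -> R) (n : nat) : seq R :=
  match n with
  | 0 => [::]
  | n'.+1 => let s := Rlist t n' in
      rcons s (t n'.+1 / ((n'`!)%:R * 2 ^+ n')
               - \sum_(j < n') t (n'.+1 - j.+1)%N * nth 0 s j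
                   / (((n'.+1 - j.+1)%N`!)%:R * 2 ^+ (n'.+1 - j.+1)%N))
  end.

Definition M2inv (t : nat -> R) (tau : nat) : R := nth 0 (Rlist t tau) tau.-1.

End Defs.

(* Main.v *)
Require Import Defs.
From HB Require Import structures.
From mathcomp Require Import all_boot all_order all_algebra.
From mathcomp Require Import complex.
From mathcomp Require Import ring.
Import Order.TTheory GRing.Theory Num.Theory.
Local Open Scope ring_scope.
From mathcomp Require Import zify.
From Stdlib Require Import FunctionalExtensionality.
Section P2.
Variable R : rcfType.
Implicit Types (Rs t : nat -> R).

Lemma size_tlist Rs n : size (tlist Rs n) = n.+1.
Proof. by elim: n => [|n IH] //=; rewrite size_rcons IH. Qed.

Lemma nth_tlist Rs n i : (i <= n)%N -> nth 0 (tlist Rs n) i = M2 Rs i.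
Proof.
elim: n => [|n IH]; first by rewrite leqn0 => /eqP ->.
rewrite leq_eqVlt => /orP[/eqP ->|]; first by [].
rewrite ltnS => hi /=; rewrite nth_rcons size_tlist ltnS hi; exact: IH.
Qed.

Lemma M2_0 Rs : M2 Rs 0 = 1. Proof. by []. Qed.

Lemma M2S Rs n : M2 Rs n.+1 = \sum_(j < n.+1)
   ((n`!)%:R / ((n - j)%N`!)%:R * 2 ^+ j * Rs j.+1 * M2 Rs (n - j)%N).
Proof.
rewrite /M2 /= nth_rcons size_tlist ltnn eqxx; apply: eq_bigr => j _.
by rewrite nth_tlist // leq_subr.
Qed.

Lemma size_Rlist t n : size (Rlist t n) = n.
Proof. by elim: n => [|n IH] //=; rewrite size_rcons IH. Qed.

Lemma nth_Rlist t n i : (i < n)%N -> nth 0 (Rlist t n) i = M2inv t i.+1.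
Proof.
elim: n => [|n IH] //.
rewrite ltnS leq_eqVlt => /orP[/eqP ->|]; first by [].
move=> hi /=; rewrite nth_rcons size_Rlist hi; exact: IH.
Qed.

Lemma M2invS t n : M2inv t n.+1 = t n.+1 / ((n`!)%:R * 2 ^+ n)
   - \sum_(j < n) t (n - j)%N * M2inv t j.+1
        / ((((n - j)%N)`!)%:R * 2 ^+ (n - j)%N).
Proof.
rewrite /M2inv /= nth_rcons size_Rlist ltnn eqxx; congr (_ - _).
by apply: eq_bigr => j _; rewrite nth_Rlist // subSS.
Qed.

Lemma fact_neq0 n : ((n`!)%:R : R) != 0.
Proof. by rewrite pnatr_eq0 -lt0n fact_gt0. Qed.

Lemma two_neq0 n : (2 ^+ n : R) != 0.
Proof. by rewrite expf_neq0 // pnatr_eq0. Qed.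

Lemma M2invK Rs n : (1 <= n)%N -> M2inv (M2 Rs) n = Rs n.
Proof.
case: n => // n _; elim/ltn_ind: n => n IH.
rewrite M2invS M2S big_ord_recr /= subnn M2_0 mulrDl mulr_suml.
have -> : \sum_(j < n) M2 Rs (n - j)%N * M2inv (M2 Rs) j.+1
        / (((n - j)%N`!)%:R * 2 ^+ (n - j)) =
   \sum_(i < n) ((n`!)%:R / ((n - i)%N`!)%:R * 2 ^+ i * Rs i.+1 *
      M2 Rs (n - i)%N) / ((n`!)%:R * 2 ^+ n).
  apply: eq_bigr => j _.
  rewrite IH ?(ltn_ord j) //.
  have hj : (j <= n)%N by apply: ltnW.
  have -> : (2:R) ^+ n = 2 ^+ j * 2 ^+ (n - j) by rewrite -exprD subnKC.
  have := fact_neq0 n; have := fact_neq0 (n - j); have := two_neq0 j;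
    have := two_neq0 (n - j) => h1 h2 h3 h4.
  by field; rewrite ?h1 ?h2 ?h3 ?h4 ?mulf_neq0.
rewrite addrC addKr fact0.
rewrite divr1 mulr1 mulrAC divff ?mul1r // mulf_neq0 //.
  exact: fact_neq0.
exact: two_neq0.
Qed.

Lemma M2K t n : (1 <= n)%N -> M2 (M2inv t) n = t n.
Proof.
case: n => // n _; elim/ltn_ind: n => n IH.
rewrite M2S big_ord_recr /= subnn M2_0 M2invS fact0.
have -> : \sum_(i < n) ((n`!)%:R / ((n - i)%N`!)%:R * 2 ^+ i *
      M2inv t i.+1 * M2 (M2inv t) (n - i)%N) =
   ((n`!)%:R / 1%:R * 2 ^+ n) * \sum_(j < n) t (n - j)%N * M2inv t j.+1
        / (((n - j)%N`!)%:R * 2 ^+ (n - j)).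
  rewrite mulr_sumr; apply: eq_bigr => j _.
  have hj : (j < n)%N by [].
  have -> : M2 (M2inv t) (n - j)%N = t (n - j)%N.
    have hm : (n - j)%N = (n - j.+1).+1 by lia.
    by rewrite hm IH //; lia.
  have -> : (2:R) ^+ n = 2 ^+ j * 2 ^+ (n - j) by rewrite -exprD subnKC // ltnW.
  have := fact_neq0 n; have := fact_neq0 (n - j); have := two_neq0 j;
    have := two_neq0 (n - j) => h1 h2 h3 h4.
  by field; rewrite ?h1 ?h2 ?h3 ?h4 ?mulf_neq0.
have := fact_neq0 n; have := two_neq0 n => h1 h2.
rewrite divr1 mulr1 mulrBr addrCA subrr addr0 mulrCA divff ?mulr1 // mulf_neq0 //.
Qed.
End P2.
Section N.
Variable R : rcfType.

Lemma deriv_prod k (F : 'I_k -> {poly R}) :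
  (\prod_(i < k) F i)^`() = \sum_(i < k) (F i)^`() * \prod_(j < k | j != i) F j.
Proof.
elim: k F => [|k IH] F; first by rewrite !big_ord0 derivC.
rewrite big_ord_recr /= derivM IH big_ord_recr /= mulr_suml; congr (_ + _).
  apply: eq_bigr => i _.
  rewrite [in RHS]big_mkcond big_ord_recr /=.
  rewrite [X in _ * (_ * X)]ifT; last by rewrite -val_eqE /= neq_ltn ltn_ord orbT.
  rewrite -big_mkcond /= -mulrA; congr (_ * (_ * _)).
rewrite mulrC [in RHS]big_mkcond big_ord_recr /= eqxx mulr1.
congr (_ * _); apply: eq_bigr => j _.
by rewrite ifT // -val_eqE /= neq_ltn ltn_ord.
Qed.

Lemma coef_quot (a : R) (P Q : {poly R}) : P = ('X - a%:P) * Q ->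
  forall m, Q`_m = \sum_(l < size P) P`_(m.+1 + l) * a ^+ l.
Proof.
move=> hP m.
have hc n : P`_n.+1 = Q`_n - a * Q`_n.+1.
  by rewrite hP mulrBl coefB coefXM coefCM.
have hs : (size Q <= size P)%N.
  have [->|hQ] := eqVneq Q 0; first by rewrite size_poly0.
  by rewrite hP size_mul ?polyXsubC_eq0 // size_XsubC.
pose f l := - (Q`_(m + l) * a ^+ l).
transitivity (\sum_(0 <= l < size P) (f l.+1 - f l)); last first.
  rewrite big_mkord; apply: eq_bigr => l _.
  by rewrite addSn hc /f addnS exprS; ring.
rewrite telescope_sumr // /f addn0 expr0 mulr1.
rewrite (nth_default 0 (_ : (size Q <= m + size P)%N)) ?mul0r ?oppr0 ?add0r ?opprK //.
exact: leq_trans hs (leq_addl _ _).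
Qed.

Definition Pr k (r : 'I_k -> R) := \prod_(i < k) ('X - (r i)%:P).
Arguments Pr {k}.

Lemma Pr_seq {k} (r : 'I_k -> R) : Pr r = \prod_(x <- map r (enum 'I_k)) ('X - x%:P).
Proof. by rewrite /Pr big_map big_enum. Qed.

Lemma size_Pr {k} (r : 'I_k -> R) : size (Pr r) = k.+1.
Proof. by rewrite Pr_seq size_prod_XsubC size_map size_enum_ord. Qed.

Lemma monic_Pr {k} (r : 'I_k -> R) : Pr r \is monic.
Proof. exact: monic_prod_XsubC. Qed.

Lemma newton {k} (r : 'I_k -> R) m :
  m%:R * (Pr r)`_m = k%:R * (Pr r)`_m
     + \sum_(l < size (Pr r)) (Pr r)`_(m.+1 + l) * powsum r l.+1.
Proof.
set P := Pr r.
pose Q i := \prod_(j < k | j != i) ('X - (r j)%:P).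
have hPQ i : P = ('X - (r i)%:P) * Q i by rewrite /P /Pr (bigD1 i).
have hd : P^`() = \sum_i Q i.
  by rewrite /P /Pr deriv_prod; apply: eq_bigr => i _; rewrite derivXsubC mul1r.
have hX : 'X * P^`() = P *+ k + \sum_i (r i)%:P * Q i.
  rewrite hd mulr_sumr.
  transitivity (\sum_(i < k) (P + (r i)%:P * Q i)).
    by apply: eq_bigr => i _; rewrite (hPQ i); ring.
  by rewrite big_split /= sumr_const card_ord.
have e := congr1 (fun p : {poly R} => p`_m) hX.
rewrite /= coefXM coefD coefMn coef_sum in e.
have hL : (if m == 0%N then 0 else P^`()`_m.-1) = m%:R * P`_m.
  by case: (m) => [|m']; rewrite ?mul0r // coef_deriv /= mulr_natl.
rewrite -hL e mulr_natl; congr (_ + _).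
under eq_bigr => i _ do rewrite coefCM (@coef_quot _ _ _ (hPQ i)) mulr_sumr.
rewrite exchange_big /=; apply: eq_bigr => l _; rewrite /powsum mulr_sumr.
by apply: eq_bigr => i _; rewrite exprS; ring.
Qed.

Definition bb (Rs : nat -> R) j := nth 0 (Defs.bseq Rs j) j.-1.

Lemma size_bseq (Rs : nat -> R) n : size (Defs.bseq Rs n) = n.
Proof. by elim: n => [|n IH] //=; rewrite size_rcons IH. Qed.

Lemma nth_bseq (Rs : nat -> R) n i : (i < n)%N -> nth 0 (Defs.bseq Rs n) i = bb Rs i.+1.
Proof.
elim: n => [|n IH] //.
rewrite ltnS leq_eqVlt => /orP[/eqP ->|]; first by [].
move=> hi /=; rewrite nth_rcons size_bseq hi; exact: IH.
Qed.

Lemma bbS (Rs : nat -> R) n : bb Rs n.+1 =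
  (Rs n.+1 - \sum_(i < n) Rs i.+1 * bb Rs (n - i)%N) / n.+1%:R.
Proof.
rewrite /bb /= nth_rcons size_bseq ltnn eqxx; congr ((_ - _) / _).
apply: eq_bigr => i _; have := ltn_ord i; move=> hi; rewrite nth_bseq; last by lia.
by congr (_ * bb _ _); lia.
Qed.

Lemma bb_coef {k} (r : 'I_k -> R) n : (n < k)%N ->
  bb (powsum r) n.+1 = - (Pr r)`_(k - n.+1).
Proof.
elim/ltn_ind: n => n IH hn.
have N := newton r (k - n.+1).
rewrite size_Pr in N.
set c := (Pr r)`_(k - n.+1) in N *.
rewrite bbS.
have hlead : (Pr r)`_k = 1.
  by have := monicP (monic_Pr r); rewrite lead_coefE size_Pr.
set X := (powsum r n.+1 - _).
have hS : \sum_(l < k.+1) (Pr r)`_((k - n.+1).+1 + l) * powsum r l.+1 = X.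
  rewrite -(big_mkord xpredT (fun l => (Pr r)`_((k - n.+1).+1 + l) * powsum r l.+1)).
  rewrite (@big_cat_nat _ _ _ n) /=; [|by []|lia].
  rewrite (@big_ltn _ _ _ n); last by lia.
  rewrite [\sum_(n.+1 <= i < k.+1) _]big_nat_cond.
  rewrite [\sum_(n.+1 <= i < k.+1 | _) _]big1 ?addr0; last first.
    move=> l /andP[/andP[hl1 hl2] _]; rewrite nth_default ?mul0r // size_Pr; lia.
  rewrite (_ : ((k - n.+1).+1 + n)%N = k); last by lia.
  rewrite hlead mul1r /X addrC big_mkord -sumrN; congr (_ + _).
  apply: eq_bigr => i _; have := ltn_ord i => hi.
  rewrite (_ : (n - i)%N = (n - i.+1).+1); last by lia.
  rewrite IH; [|lia|lia].
  rewrite (_ : (k - (n - i.+1).+1)%N = ((k - n.+1).+1 + i)%N); last by lia.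
  by rewrite mulrN opprK mulrC.
rewrite hS natrB // in N.
have hX : X = - (n.+1%:R * c).
  have -> : X = (k%:R - n.+1%:R) * c - k%:R * c by rewrite N; ring.
  ring.
rewrite hX mulNr mulrC mulKf //.
by rewrite pnatr_eq0.
Qed.

Lemma acoefE {k} (r : 'I_k -> R) (m : 'I_k) : acoef (powsum r) m = - (Pr r)`_m.
Proof.
have hm := ltn_ord m.
rewrite /acoef nth_bseq; last by lia.
rewrite bb_coef; last by lia.
by rewrite (_ : (k - (k - m.+1).+1)%N = m); last by lia.
Qed.

Lemma char_poly_castmx n m (e : n = m) (A : 'M[R]_n) :
  char_poly (castmx (e, e) A) = char_poly A.
Proof. by case: m / e; rewrite castmx_id. Qed.

Lemma mi_char {k} (r : 'I_k -> R) : char_poly (mi_matrixA (powsum r) k) = Pr r.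
Proof.
have e : (size (Pr r)).-1 = k by rewrite size_Pr.
rewrite (_ : mi_matrixA _ _ = castmx (e, e) (companionmx (Pr r))).
  by rewrite char_poly_castmx companionmxK // monic_Pr.
apply/matrixP => i j; rewrite castmxE !mxE /= size_Pr /=.
have hi := ltn_ord i.
case: ltnP => h.
  rewrite ifF; last by apply/eqP; lia.
  by rewrite eq_sym.
rewrite ifT; last by apply/eqP; lia.
exact: acoefE.
Qed.

Lemma bseq_ext (Rs Rs' : nat -> R) n :
  (forall i, (1 <= i <= n)%N -> Rs i = Rs' i) -> Defs.bseq Rs n = Defs.bseq Rs' n.
Proof.
elim: n => [|n IH] h //=.
rewrite IH; last by move=> i /andP[h1 h2]; apply: h; lia.
rewrite (h n.+1); last by lia.
congr (rcons _ ((_ - _) / _)); apply: eq_bigr => i _.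
by rewrite h //; have := ltn_ord i; lia.
Qed.

Lemma sorted_r {k} (r : 'I_k -> R) :
  (forall i j : 'I_k, (i <= j)%N -> r j <= r i) ->
  sorted (fun x y : R => y <= x) (map r (enum 'I_k)).
Proof.
move=> hr; rewrite sorted_map.
apply: (@sub_sorted _ (relpre val ltn)).
  by move=> i j /= hij; apply: hr; exact: ltnW.
by rewrite -sorted_map val_enum_ord iota_ltn_sorted.
Qed.

Lemma part1a k (r r' : 'I_k -> R) :
      (forall i j : 'I_k, (i <= j)%N -> r j <= r i) ->
      (forall i j : 'I_k, (i <= j)%N -> r' j <= r' i) ->
      (forall tau, (1 <= tau <= k)%N -> powsum r tau = powsum r' tau) ->
      r = r'.
Proof.
move=> hr hr' hp.
have hb : Defs.bseq (powsum r) k = Defs.bseq (powsum r') k by apply: bseq_ext.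
have hP : Pr r = Pr r' by rewrite -!mi_char /mi_matrixA /acoef hb.
move: hP; rewrite !Pr_seq => /prod_XsubC_eq hperm.
have heq := sorted_eq (leT := fun x y : R => y <= x)
  (fun x y z h1 h2 => le_trans h2 h1) (fun x y h => le_anti (etrans (andbC _ _) h))
  (sorted_r _ hr) (sorted_r _ hr') hperm.
apply: functional_extensionality => i.
have h1 : nth 0 (map r (enum 'I_k)) i = nth 0 (map r' (enum 'I_k)) i by rewrite heq.
have hn (f : 'I_k -> R) : nth 0 (map f (enum 'I_k)) i = f i.
  set e := enum 'I_k.
  have he : nth i e i = i by rewrite /e nth_ord_enum.
  have hs : (i < size e)%N by rewrite /e size_enum_ord.
  by rewrite (nth_map i) // he.
by rewrite !hn in h1.
Qed.

Lemma part1b k (r : 'I_k -> R) :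
  (forall i j : 'I_k, (i <= j)%N -> r j <= r i) -> (forall i, 0 <= r i) ->
  forall s : seq R[i],
    char_poly (map_mx (fun x : R => (x%:C)%C) (@mi_matrixA R (powsum r) k))
      = \prod_(z <- s) ('X - z%:P) ->
    forall j : 'I_k, jth_largest_mod s j = ((r j)%:C)%C.
Proof.
move=> hr hnn s hs j.
set L := map (fun i => (r i)%:C%C) (enum 'I_k).
have hc : char_poly (map_mx (real_complex R) (mi_matrixA (powsum r) k))
   = \prod_(x <- L) ('X - x%:P).
  rewrite -map_char_poly mi_char /Pr rmorph_prod big_map big_enum /=.
  by apply: eq_bigr => i _; rewrite map_polyXsubC.
have hperm : perm_eq L s by apply: prod_XsubC_eq; rewrite -hc; exact: hs.
have hLn : map (fun z => `|z|) L = L.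
  rewrite -map_comp; apply: eq_map => i /=; rewrite ger0_norm //.
  by rewrite -(rmorph0 (real_complex R)) lecR.
have hperm2 : perm_eq L (map (fun z => `|z|) s).
  by rewrite -{1}hLn; apply: perm_map.
have hLs : sorted (fun x y : R[i] => y <= x) L.
  rewrite /L (_ : map _ _ = map (real_complex R) (map r (enum 'I_k))); last first.
    exact: map_comp.
  rewrite sorted_map; apply: (sub_sorted _ (sorted_r _ hr)).
  by move=> x y /=; rewrite lecR.
have htr : transitive (fun x y : R[i] => y <= x).
  by move=> x y z h1 h2; exact: le_trans h2 h1.
have hsort : sort (fun x y : R[i] => y <= x) (map (fun z => `|z|) s) = L.
  have Htot : {in L &, total (fun x y : R[i] => y <= x)}.
    move=> x y /mapP[a _ ->] /mapP[b _ ->]; rewrite !lecR; exact: le_total.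
  have Htr : {in L & &, transitive (fun x y : R[i] => y <= x)}.
    by move=> x y z _ _ _; apply: htr.
  have Hanti : {in L &, antisymmetric (fun x y : R[i] => y <= x)}.
    by move=> x y _ _ h; apply: le_anti; rewrite andbC.
  have hP := fun l => @perm_sort_inP _ (fun x y : R[i] => y <= x) L l Htot Htr Hanti.
  by rewrite -(elimT (hP _) hperm2) (sorted_sort htr hLs).
rewrite /jth_largest_mod hsort /L.
set e := enum 'I_k.
have he : nth j e j = j by rewrite /e nth_ord_enum.
have hs' : (j < size e)%N by rewrite /e size_enum_ord.
by rewrite (nth_map j) // he.
Qed.
End N.

Theorem proposition2 (R : rcfType) (k : nat) :
  (* (1) uniqueness: r_{1:k} (sorted, nonnegative) is determined by R_{1:k} *)
  (forall r r' : 'I_k -> R,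
      (forall i j : 'I_k, (i <= j)%N -> r j <= r i) -> (forall i, 0 <= r i) ->
      (forall i j : 'I_k, (i <= j)%N -> r' j <= r' i) -> (forall i, 0 <= r' i) ->
      (forall tau, (1 <= tau <= k)%N -> powsum r tau = powsum r' tau) ->
      r = r')
  /\
  (* (1) explicit inverse: r_j is the j-th largest eigenvalue modulus of A *)
  (forall r : 'I_k -> R,
      (forall i j : 'I_k, (i <= j)%N -> r j <= r i) -> (forall i, 0 <= r i) ->
      forall s : seq R[i],
        char_poly (map_mx (fun x : R => (x%:C)%C) (@mi_matrixA R (powsum r) k))
          = \prod_(z <- s) ('X - z%:P) ->
        forall j : 'I_k, jth_largest_mod s j = ((r j)%:C)%C)
  /\
  (* (2) M2 is invertible, with inverse given by the explicit formula *)
  (forall Rs : nat -> R,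
      forall tau, (1 <= tau <= k)%N -> M2inv (M2 Rs) tau = Rs tau)
  /\
  (forall t : nat -> R,
      forall tau, (1 <= tau <= k)%N -> M2 (M2inv t) tau = t tau).
Proof.
split; first by move=> r r' hr _ hr' _ hp; exact: (@part1a R k r r' hr hr' hp).
split; first by move=> r hr hnn s hs j; exact: (@part1b R k r hr hnn s hs j).
split => [Rs tau /andP[h _] | t tau /andP[h _]].
  exact: (@M2invK R Rs tau h).
exact: (@M2K R t tau h).
Qed.
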